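(* Let $k\ge 2$, let $\mathbf V_1,\ldots,\mathbf V_k$ and $\mathbf Q$ be $p\times p$ positive definite matrices, $\mathbf A=(\sum_{i=1}^k\mathbf V_i^{-1})^{-1}$, and $d_1,\ldots,d_k$ real constants. For $\mathbf x_1,\ldots,\mathbf x_k\in\mathbb R^p$, not all equal, let $\hat{\boldsymbol\nu}=\mathbf A\sum_{i=1}^k\mathbf V_i^{-1}\mathbf x_i$ and $$B(\mathbf x_1,\ldots,\mathbf x_k)=\frac{\{\sum_{i=1}^k d_i(\mathbf x_i-\hat{\boldsymbol\nu})\}^\top\mathbf Q\{\sum_{i=1}^k d_i(\mathbf x_i-\hat{\boldsymbol\nu})\}}{\sum_{j=1}^k(\mathbf x_j-\hat{\boldsymbol\nu})^\top\mathbf V_j^{-1}(\mathbf x_j-\hat{\boldsymbol\nu})}.$$ Then $$B(\mathbf x_1,\ldots,\mathbf x_k)\le \mathrm{Ch}_{\max}\Big(\Big(\sum_{i=1}^k d_i^2\mathbf V_i-\Big(\sum_{i=1}^k d_i\Big)^2\mathbf A\Big)\mathbf Q\Big).$$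
   Context: $\mathrm{Ch}_{\max}(\mathbf C)$ denotes the maximum characteristic value (eigenvalue) of the matrix $\mathbf C$. *)

(* Defs.v *)
From HB Require Import structures.
From mathcomp Require Import all_boot all_order all_algebra.
From mathcomp Require Import reals.
Set Implicit Arguments. Unset Strict Implicit. Unset Printing Implicit Defensive.
Import Order.TTheory GRing.Theory Num.Theory.
Local Open Scope ring_scope.

Definition posdef {R : realType} {p : nat} (M : 'M[R]_p) : Prop :=
  M^T = M /\ forall x : 'cV[R]_p, x != 0 -> 0 < (x^T *m M *m x) 0 0.

Definition qform {R : realType} {p : nat} (x : 'cV[R]_p) (M : 'M[R]_p)
  (y : 'cV[R]_p) : R := (x^T *m M *m y) 0 0.

Definition is_chmax {R : realType} {p : nat} (C : 'M[R]_p) (l : R) : Prop :=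
  eigenvalue C l /\ forall m, eigenvalue C m -> m <= l.

Definition Amat {R : realType} {p k : nat} (V : 'I_k -> 'M[R]_p) : 'M[R]_p :=
  invmx (\sum_(i < k) invmx (V i)).

Definition nuhat {R : realType} {p k : nat} (V : 'I_k -> 'M[R]_p)
  (x : 'I_k -> 'cV[R]_p) : 'cV[R]_p :=
  Amat V *m (\sum_(i < k) invmx (V i) *m x i).

Definition Bratio {R : realType} {p k : nat} (V : 'I_k -> 'M[R]_p)
  (Q : 'M[R]_p) (d : 'I_k -> R) (x : 'I_k -> 'cV[R]_p) : R :=
  let nu := nuhat V x in
  let w := \sum_(i < k) d i *: (x i - nu) in
  qform w Q w / \sum_(j < k) qform (x j - nu) (invmx (V j)) (x j - nu).

(* Main.v *)
Require Import Defs.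
From HB Require Import structures.
From mathcomp Require Import all_boot all_order all_algebra.
From mathcomp Require Import reals.
From mathcomp Require Import classical_sets boolp topology normedtype derive.
From mathcomp Require Import ring lra.
Import Order.TTheory GRing.Theory Num.Theory.
Set Implicit Arguments. Unset Strict Implicit. Unset Printing Implicit Defensive.
Local Open Scope ring_scope.
Section QF.
Variables (R : realType) (p : nat).
Implicit Types (a b c : 'cV[R]_p) (M N : 'M[R]_p).

Lemma qformDl a b M c : qform (a + b) M c = qform a M c + qform b M c.
Proof. by rewrite /qform raddfD /= !mulmxDl mxE. Qed.
Lemma qformZl t a M c : qform (t *: a) M c = t * qform a M c.
Proof. by rewrite /qform linearZ /= -!scalemxAl mxE. Qed.
Lemma qformNl a M c : qform (- a) M c = - qform a M c.
Proof. by rewrite -scaleN1r qformZl mulN1r. Qed.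
Lemma qformBl a b M c : qform (a - b) M c = qform a M c - qform b M c.
Proof. by rewrite qformDl qformNl. Qed.
Lemma qformDr a b M c : qform c M (a + b) = qform c M a + qform c M b.
Proof. by rewrite /qform !mulmxDr mxE. Qed.
Lemma qformZr t a M c : qform c M (t *: a) = t * qform c M a.
Proof. by rewrite /qform -!scalemxAr mxE. Qed.
Lemma qformNr a M c : qform c M (- a) = - qform c M a.
Proof. by rewrite -scaleN1r qformZr mulN1r. Qed.
Lemma qformBr a b M c : qform c M (a - b) = qform c M a - qform c M b.
Proof. by rewrite qformDr qformNr. Qed.
Lemma qformDm a M N c : qform a (M + N) c = qform a M c + qform a N c.
Proof. by rewrite /qform mulmxDr mulmxDl mxE. Qed.
Lemma qformZm a t M c : qform a (t *: M) c = t * qform a M c.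
Proof. by rewrite /qform -scalemxAr -scalemxAl mxE. Qed.
Lemma qformNm a M c : qform a (- M) c = - qform a M c.
Proof. by rewrite -scaleN1r qformZm mulN1r. Qed.
Lemma qformBm a M N c : qform a (M - N) c = qform a M c - qform a N c.
Proof. by rewrite qformDm qformNm. Qed.
Lemma qform_summ k a (F : 'I_k -> 'M[R]_p) c :
  qform a (\sum_(i < k) F i) c = \sum_(i < k) qform a (F i) c.
Proof. by rewrite /qform mulmx_sumr mulmx_suml summxE. Qed.
Lemma qform_sym a M c : M^T = M -> qform a M c = qform c M a.
Proof.
move=> HM; have E : (a^T *m M *m c)^T = c^T *m M *m a.
  by rewrite !trmx_mul trmxK HM mulmxA.
by rewrite /qform -E [RHS]mxE.
Qed.
End QF.

Section PD.
Variables (R : realType) (p : nat).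
Implicit Types (M : 'M[R]_p).

Lemma posdef_unit M : posdef M -> M \in unitmx.
Proof.
case=> _ Mp; rewrite unitmxE unitfE; apply/negP => /det0P [v vn0 vM].
by move: (Mp v^T); rewrite trmx_eq0 vn0 trmxK vM mul0mx mxE ltxx => /(_ isT).
Qed.

Lemma posdef_inv M : posdef M -> posdef (invmx M).
Proof.
move=> PM; have Mu := posdef_unit PM; case: PM => Ms Mp; split.
  by rewrite trmx_inv Ms.
move=> x xn0; pose y := invmx M *m x.
have E : x^T *m invmx M *m x = y^T *m M *m y.
  by rewrite /y trmx_mul trmx_inv Ms mulmxKV // mulmxA.
rewrite E; apply: Mp; apply: contraNneq xn0 => y0.
by rewrite -(mulKVmx Mu x) -/y y0 mulmx0.
Qed.

Lemma posdef_sum k (F : 'I_k -> 'M[R]_p) : (0 < k)%N ->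
  (forall i, posdef (F i)) -> posdef (\sum_(i < k) F i).
Proof.
move=> k0 PF; split.
  by rewrite linear_sum; apply: eq_bigr => i _; case: (PF i).
move=> x xn0; have := qform_summ x F x; rewrite /qform => ->.
rewrite (bigD1 (Ordinal k0)) //=.
have h1 := (PF (Ordinal k0)).2 x xn0.
have h2 : 0 <= \sum_(i < k | i != Ordinal k0) (x^T *m F i *m x) 0 0.
  by apply: sumr_ge0 => i _; apply: ltW; exact: (PF i).2.
lra.
Qed.

Lemma posdef_ge0 M x : posdef M -> 0 <= qform x M x.
Proof.
case=> _ Mp; have [->|xn0] := eqVneq x 0; last exact/ltW/Mp.
by rewrite /qform mulmx0 mxE.
Qed.
End PD.

Section Main.
Variables (R : realType) (p k : nat) (V : 'I_k -> 'M[R]_p).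
Hypothesis PV : forall i, posdef (V i).
Hypothesis k0 : (0 < k)%N.

Lemma PW i : posdef (invmx (V i)).
Proof. exact: posdef_inv. Qed.

Lemma PS : posdef (\sum_(i < k) invmx (V i)).
Proof. exact: posdef_sum k0 PW. Qed.

Lemma Sunit : (\sum_(i < k) invmx (V i)) \in unitmx.
Proof. exact: posdef_unit PS. Qed.

Lemma Asym : (Amat V)^T = Amat V.
Proof. by rewrite /Amat trmx_inv PS.1. Qed.

Lemma sumWy (x : 'I_k -> 'cV[R]_p) :
  \sum_(i < k) invmx (V i) *m (x i - nuhat V x) = 0.
Proof.
under eq_bigr do rewrite mulmxBr.
by rewrite sumrB -mulmx_suml /nuhat /Amat mulKVmx ?Sunit // subrr.
Qed.

Lemma qVW i (u z : 'cV[R]_p) : qform (V i *m u) (invmx (V i)) z = (u^T *m z) 0 0.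
Proof. by rewrite /qform trmx_mul (PV i).1 mulmxK // posdef_unit. Qed.

Lemma qsum0 (a : 'cV[R]_p) (y : 'I_k -> 'cV[R]_p) :
  \sum_(i < k) invmx (V i) *m y i = 0 ->
  \sum_(i < k) qform a (invmx (V i)) (y i) = 0.
Proof.
move=> hy; rewrite /qform -summxE.
under eq_bigr do rewrite -mulmxA.
by rewrite -mulmx_sumr hy mulmx0 mxE.
Qed.

Variables (d : 'I_k -> R) (u : 'cV[R]_p).
Let s := \sum_(i < k) d i.
Let a := s *: (Amat V *m u).
Let e i := d i *: (V i *m u) - a.

Lemma ident1 (y : 'I_k -> 'cV[R]_p) :
  \sum_(i < k) invmx (V i) *m y i = 0 ->
  (u^T *m \sum_(i < k) d i *: y i) 0 0 =
  \sum_(i < k) qform (e i) (invmx (V i)) (y i).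
Proof.
move=> hy.
under [RHS]eq_bigr do rewrite /e qformBl qformZl qVW.
rewrite sumrB qsum0 // subr0 mulmx_sumr summxE.
by apply: eq_bigr => i _; rewrite -scalemxAr mxE.
Qed.

Lemma ident2 :
  \sum_(i < k) qform (e i) (invmx (V i)) (e i) =
  qform u (\sum_(i < k) d i ^+ 2 *: V i - s ^+ 2 *: Amat V) u.
Proof.
set t := qform u (Amat V) u.
have ua : (u^T *m a) 0 0 = s * t by rewrite /a -scalemxAr mxE /t /qform mulmxA.
have aSa : qform a (\sum_(i < k) invmx (V i)) a = s ^+ 2 * t.
  rewrite /a qformZl qformZr mulrA -expr2; congr (_ * _).
  rewrite /t /qform trmx_mul Asym /Amat mulmxKV ?Sunit //.
  by rewrite mulmxA.
have hterm i : qform (e i) (invmx (V i)) (e i) =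
   d i ^+ 2 * qform u (V i) u - 2 * d i * (s * t) + qform a (invmx (V i)) a.
  rewrite /e qformBl !qformBr !qformZl !qformZr.
  rewrite (qform_sym (Amat V *m u) (V i *m u) (PW i).1) !qVW.
  have -> : (u^T *m (V i *m u)) 0 0 = qform u (V i) u by rewrite /qform mulmxA.
  have -> : (u^T *m (Amat V *m u)) 0 0 = t by rewrite /t /qform mulmxA.
  ring.
rewrite (eq_bigr _ (fun i _ => hterm i)) big_split /= sumrB -qform_summ aSa.
rewrite qformBm qformZm qform_summ.
under [X in _ = X - _]eq_bigr do rewrite qformZm.
rewrite -mulr_suml -mulr_sumr -/s /t; ring.
Qed.

Lemma CS (y : 'I_k -> 'cV[R]_p) (ee : 'I_k -> 'cV[R]_p) :
  0 < \sum_(i < k) qform (y i) (invmx (V i)) (y i) ->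
  (\sum_(i < k) qform (ee i) (invmx (V i)) (y i)) ^+ 2 <=
  (\sum_(i < k) qform (ee i) (invmx (V i)) (ee i)) *
  (\sum_(i < k) qform (y i) (invmx (V i)) (y i)).
Proof.
set D := \sum_(i < k) qform (y i) _ (y i).
set b := \sum_(i < k) qform (ee i) _ (y i).
set E := \sum_(i < k) qform (ee i) _ (ee i).
move=> Dpos; pose t := b / D.
have h : 0 <= \sum_(i < k) qform (ee i - t *: y i) (invmx (V i)) (ee i - t *: y i).
  by apply: sumr_ge0 => i _; apply: posdef_ge0; exact: PW.
have E2 : \sum_(i < k) qform (ee i - t *: y i) (invmx (V i)) (ee i - t *: y i)
   = E - 2 * t * b + t ^+ 2 * D.
  have ht i : qform (ee i - t *: y i) (invmx (V i)) (ee i - t *: y i) =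
     qform (ee i) (invmx (V i)) (ee i) - 2 * t * qform (ee i) (invmx (V i)) (y i)
     + t ^+ 2 * qform (y i) (invmx (V i)) (y i).
    rewrite qformBl !qformBr !qformZl !qformZr (qform_sym (y i) (ee i) (PW i).1).
    ring.
  by rewrite (eq_bigr _ (fun i _ => ht i)) !big_split /= sumrN -!mulr_sumr.
rewrite E2 in h.
have tD : t * D = b by rewrite /t divfK // gt_eqF.
nra.
Qed.

End Main.

Section Ray.
Import numFieldNormedType.Exports.
Local Open Scope classical_set_scope.
Variable R : realType.

Definition rq n (M : 'M[R]_n) (v : 'rV[R]_n) : R := (v *m M *m v^T) 0 0.

Lemma rq_expand n (M : 'M[R]_n) (v : 'rV[R]_n) :
  rq M v = \sum_(j < n) (\sum_(i < n) v 0 i * M i j) * v 0 j.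
Proof. by rewrite /rq !mxE; apply: eq_bigr => j _; rewrite !mxE. Qed.

Lemma rq_cont n (M : 'M[R]_n) : continuous (rq M).
Proof.
have -> : rq M = (fun v => \sum_(j < n) (\sum_(i < n) v 0 i * M i j) * v 0 j).
  by apply/funext => v; rewrite rq_expand.
apply: (continuous_big (op := +%R)) => [|j _]; first exact: add_continuous.
move=> v; apply: continuousM; last exact: coord_continuous.
move: v; apply: (continuous_big (op := +%R)) => [|i _]; first exact: add_continuous.
move=> v; apply: continuousM; first exact: coord_continuous.
exact: cst_continuous.
Qed.

Lemma rqZ n (M : 'M[R]_n) (c : R) (v : 'rV[R]_n) : rq M (c *: v) = c ^+ 2 * rq M v.
Proof. by rewrite /rq -!scalemxAl [(c *: v)^T]linearZ /= -scalemxAr scalerA mxE expr2. Qed.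


Lemma rq0 n (M : 'M[R]_n) : rq M 0 = 0.
Proof. by rewrite /rq !mul0mx mxE. Qed.

Definition nrm n (v : 'rV[R]_n) : R := \sum_(i < n) v ord0 i ^+ 2.

Lemma nrm_cont n : continuous (@nrm n).
Proof.
apply: (continuous_big (op := +%R)) => [|j _]; first exact: add_continuous.
have -> : (fun w : 'rV[R]_n => w ord0 j ^+ 2) =
   (fun w : 'rV[R]_n => w ord0 j) \* (fun w : 'rV[R]_n => w ord0 j).
  by apply/funext => w /=; rewrite expr2.
by move=> v; apply: continuousM; exact: coord_continuous.
Qed.

Lemma nrm_ge n (v : 'rV[R]_n) i : v ord0 i ^+ 2 <= nrm v.
Proof.
rewrite /nrm (bigD1 i) //= lerDl sumr_ge0 // => j _; exact: sqr_ge0.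
Qed.

Lemma nrm_gt0 n (v : 'rV[R]_n) : v != 0 -> 0 < nrm v.
Proof.
move=> vn0; have [i vi] : exists i, v ord0 i != 0.
  apply/existsP; apply: contraNT vn0; rewrite negb_exists => /forallP H.
  apply/eqP/rowP => i; rewrite mxE; apply/eqP; have := H i; by rewrite negbK.
by apply: lt_le_trans (nrm_ge v i); rewrite lt_def sqrf_eq0 vi sqr_ge0.
Qed.

Lemma nrmZ n c (v : 'rV[R]_n) : nrm (c *: v) = c ^+ 2 * nrm v.
Proof.
by rewrite /nrm mulr_sumr; apply: eq_bigr => i _; rewrite mxE exprMn.
Qed.

Lemma rq_max n (G H : 'M[R]_n) : (0 < n)%N ->
  (forall v : 'rV[R]_n, v != 0 -> 0 < rq H v) ->
  exists2 v0 : 'rV[R]_n, v0 != 0 &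
    forall v, rq G v * rq H v0 <= rq G v0 * rq H v.
Proof.
move=> n_gt0 Hpos.
pose K := [set v : 'rV[R]_n | forall i, `[-1, 1]%classic (v ord0 i)] `&`
          (@nrm n @^-1` [set x | x = 1]).
have Kcomp : compact K.
  apply: compact_closedI.
    have := @rV_compact R n (fun=> `[-1, 1]%classic) (fun=> @segment_compact R (-1) 1).
    by [].
  apply: (@preimage_closed _ _ (@nrm n)); last exact: closed_eq.
  by move=> x _; exact: nrm_cont.
have box : forall v : 'rV[R]_n, nrm v = 1 -> forall i, `[-1, 1]%classic (v ord0 i).
  move=> v nv i; have := nrm_ge v i; rewrite nv => h.
  rewrite /= in_itv /=; apply/andP; split; nra.
have Kn0 : forall v, K v -> v != 0.
  move=> v [_ /= nv]; apply/eqP => v0; move: nv; rewrite v0 /nrm.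
  rewrite big1 => [/eqP|i _]; first by rewrite eq_sym oner_eq0.
  by rewrite mxE expr0n.
pose f v := rq G v / rq H v.
have [v0 v0K v0max] : exists2 c, c \in K & forall t, t \in K -> f t <= f c.
  apply: compact_EVT_max => //.
    pose i0 := Ordinal n_gt0; exists (delta_mx ord0 i0).
    have n1 : nrm (delta_mx ord0 i0 : 'rV[R]_n) = 1.
      rewrite /nrm (bigD1 i0) // big1 => [|i ni0].
        by rewrite !mxE !eqxx /= expr1n addr0.
      by rewrite mxE eqxx (negbTE ni0) expr0n.
    by split; [exact: box | exact: n1].
  apply: continuous_in_subspaceT => x /set_mem xK.
  apply: (@continuousM _ _ (rq G) (fun v => (rq H v)^-1)); first exact: (@rq_cont _ G x).
  apply: (@continuousV _ _ (rq H)); last exact: (@rq_cont _ H x).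
  by rewrite gt_eqF // Hpos // Kn0.
have v0n0 : v0 != 0 by apply: Kn0; exact: set_mem.
exists v0 => // v.
have [->|vn0] := eqVneq v 0; first by rewrite !rq0 mul0r mulr0.
have nv := nrm_gt0 vn0.
pose c := (Num.sqrt (nrm v))^-1.
have c2 : c ^+ 2 * nrm v = 1.
  by rewrite /c exprVn sqr_sqrtr ?ltW // mulVf // gt_eqF.
have cn0 : c != 0 by apply/eqP => c0; move: c2; rewrite c0 expr0n mul0r => /eqP; rewrite eq_sym oner_eq0.
have cvK : (c *: v) \in K.
  have n1 : nrm (c *: v) = 1 by rewrite nrmZ c2.
  by apply/mem_set; split; [exact: box | exact: n1].
have := v0max _ cvK; rewrite /f !rqZ.
have Hv := Hpos _ vn0; have Hv0 := Hpos _ v0n0.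
have c2p : 0 < c ^+ 2 by rewrite lt_def sqrf_eq0 cn0 sqr_ge0.
rewrite -mulf_div divff ?gt_eqF // mul1r.
by rewrite ler_pdivrMr // mulrAC ler_pdivlMr.
Qed.

End Ray.

Section Fin.
Variable R : realType.

Lemma rqE n (S : 'M[R]_n) (r : 'rV[R]_n) : rq S r = qform r^T S r^T.
Proof. by rewrite /rq /qform trmxK. Qed.

Lemma psd_zero n (S : 'M[R]_n) (r0 : 'rV[R]_n) : S^T = S ->
  (forall r, 0 <= rq S r) -> rq S r0 = 0 -> r0 *m S = 0.
Proof.
move=> Ss Sp S0; apply/rowP => j; rewrite [RHS]mxE.
pose u : 'rV[R]_n := delta_mx 0 j.
pose b := qform r0^T S u^T.
have bE : (r0 *m S) 0 j = b.
  by rewrite /b /qform trmxK /u trmx_delta -colE [RHS]mxE.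
rewrite bE; pose c := rq S u.
have c0 : 0 <= c by exact: Sp.
pose t := - b / (c + 1).
have tc : t * (c + 1) = - b by rewrite /t divfK // gt_eqF // ltr_wpDl.
have h := Sp (r0 + t *: u).
have E : rq S (r0 + t *: u) = rq S r0 + 2 * t * b + t ^+ 2 * c.
  rewrite !rqE raddfD /= linearZ /= qformDl !qformDr !qformZl !qformZr.
  rewrite (qform_sym u^T r0^T Ss) -/b /c rqE; ring.
rewrite E S0 in h.
have e1 : (c + 1) ^+ 2 * (0 + 2 * t * b + t ^+ 2 * c) =
   2 * b * (t * (c + 1)) * (c + 1) + (t * (c + 1)) ^+ 2 * c by ring.
rewrite tc in e1.
have h3 : 0 <= (c + 1) ^+ 2 * (0 + 2 * t * b + t ^+ 2 * c).
  by apply: mulr_ge0 => //; exact: sqr_ge0.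
rewrite e1 in h3.
have hb : b ^+ 2 * (c + 2) <= 0 by nra.
have : b ^+ 2 <= 0 by nra.
rewrite le_eqVlt ltNge sqr_ge0 orbF sqrf_eq0 => /eqP ->; done.
Qed.

End Fin.

Theorem lemma3 (R : realType) (p k : nat) (V : 'I_k -> 'M[R]_p) (Q : 'M[R]_p)
  (d : 'I_k -> R) (x : 'I_k -> 'cV[R]_p) :
  (2 <= k)%N ->
  (forall i, posdef (V i)) -> posdef Q ->
  (exists i j, x i != x j) ->
  exists l : R,
    is_chmax ((\sum_(i < k) (d i) ^+ 2 *: V i
               - (\sum_(i < k) d i) ^+ 2 *: Amat V) *m Q) l /\
    Bratio V Q d x <= l.
Proof.
move=> k2 PV PQ [i0 [j0 xij]].
have k0 : (0 < k)%N by apply: leq_trans k2.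
have p0 : (0 < p)%N.
  rewrite lt0n; apply/eqP => p0; move: xij; apply/negP; rewrite negbK.
  suff : forall a b : 'cV[R]_p, a == b by [].
  by rewrite p0 => a b; rewrite [a]flatmx0 [b]flatmx0.
have Qu := posdef_unit PQ.
pose s := \sum_(i < k) d i.
pose M := \sum_(i < k) d i ^+ 2 *: V i - s ^+ 2 *: Amat V.
have Msym : M^T = M.
  rewrite /M raddfB /= linear_sum /= linearZ /= (Asym PV k0); congr (_ - _).
  by apply: eq_bigr => i _; rewrite linearZ /= (PV i).1.
have Mpsd : forall z, 0 <= qform z M z.
  move=> z; rewrite /M /s -(ident2 PV k0 d z); apply: sumr_ge0 => i _.
  apply: posdef_ge0; exact: PW.
pose G := Q *m M *m Q.
have rqG : forall r, rq G r = qform (Q *m r^T) M (Q *m r^T).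
  by move=> r; rewrite /rq /qform trmx_mul PQ.1 trmxK /G !mulmxA.
have HQ : forall v : 'rV[R]_p, v != 0 -> 0 < rq Q v.
  by move=> v vn0; rewrite rqE; apply: PQ.2; rewrite trmx_eq0.
have [r0 r0n0 hmax] := rq_max G p0 HQ.
have Q0p : 0 < rq Q r0 := HQ _ r0n0.
pose l := rq G r0 / rq Q r0.
have hle : forall r, rq G r <= l * rq Q r.
  by move=> r; rewrite /l mulrAC ler_pdivlMr //; exact: hmax.
have l0 : 0 <= l by apply: divr_ge0; [rewrite rqG; exact: Mpsd | exact: ltW].
exists l; split; [split|].
- apply/eigenvalueP; exists (r0 *m Q).
    pose S' := l *: Q - G.
    have S'sym : S'^T = S'.
      by rewrite /S' raddfB /= linearZ /= /G !trmx_mul !PQ.1 Msym mulmxA.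
    have rqS : forall r, rq S' r = l * rq Q r - rq G r.
      by move=> r; rewrite !rqE /S' qformBm qformZm.
    have hz := psd_zero S'sym (fun r => _ : 0 <= rq S' r) (_ : rq S' r0 = 0).
    have {}hz : r0 *m S' = 0.
      apply: hz.
        by move=> r; rewrite rqS subr_ge0; exact: hle.
      by rewrite rqS /l divfK ?subrr // gt_eqF.
    move/eqP: hz; rewrite /S' mulmxBr subr_eq0 -scalemxAr => /eqP hz.
    by rewrite hz /G !mulmxA.
  apply: contraNneq r0n0 => h0.
  by rewrite -(mulmxK Qu r0) h0 mul0mx.
- move=> m /eigenvalueP [v vC vn0].
  pose r := v *m invmx Q.
  have vr : v = r *m Q by rewrite /r mulmxKV.
  have rn0 : r != 0 by apply: contraNneq vn0 => r0'; rewrite vr r0' mul0mx.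
  have hG : rq G r = m * rq Q r.
    have E : r *m G = m *: (r *m Q).
      by rewrite /G !mulmxA -vr -mulmxA vC.
    by rewrite /rq E -scalemxAl mxE.
  have := hle r; rewrite hG => h.
  by rewrite -(ler_pM2r (HQ _ rn0)).
- have final : forall N D Mu : R, 0 <= N -> 0 < D -> N ^+ 2 <= Mu * D ->
      Mu <= l * N -> N / D <= l.
    move=> N D Mu N0 D0 h1 h2; rewrite ler_pdivrMr //.
    have [->|Np] := eqVneq N 0; first by rewrite mulr_ge0 // ltW.
    have Npos : 0 < N by rewrite lt_def Np N0.
    have h3 : N * N <= (l * D) * N.
      apply: le_trans (_ : Mu * D <= _); first by rewrite -expr2.
      by rewrite mulrAC ler_pM2r.
    by rewrite -(ler_pM2r Npos).
  rewrite /Bratio /=.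
  pose u := Q *m \sum_(i < k) d i *: (x i - nuhat V x).
  have Dp : 0 < \sum_(i < k) qform (x i - nuhat V x) (invmx (V i)) (x i - nuhat V x).
    have [i1 yi1] : exists i, x i - nuhat V x != 0.
      case: (eqVneq (x i0 - nuhat V x) 0) => h; last by exists i0.
      exists j0; apply/eqP => h'; move/eqP: xij; apply.
      by rewrite (subr0_eq h) (subr0_eq h').
    rewrite (bigD1 i1) //=.
    have h1 := (PW PV i1).2 _ yi1.
    have h2 : 0 <= \sum_(i < k | i != i1)
        qform (x i - nuhat V x) (invmx (V i)) (x i - nuhat V x).
      by apply: sumr_ge0 => i _; apply: posdef_ge0; exact: PW.
    rewrite /qform in h1 h2 *; lra.
  apply: (final _ _ (qform u M u)).
  + exact: posdef_ge0.
  + exact: Dp.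
  + have hy := sumWy PV k0 x.
    have h1 := ident1 PV d u hy.
    have h3 := ident2 PV k0 d u.
    have h2 := CS PV (y := fun i => x i - nuhat V x)
       (fun i => d i *: (V i *m u) - (\sum_(i1 < k) d i1) *: (Amat V *m u)) Dp.
    have eN : qform (\sum_(i < k) d i *: (x i - nuhat V x)) Q
                    (\sum_(i < k) d i *: (x i - nuhat V x)) =
              (u^T *m \sum_(i < k) d i *: (x i - nuhat V x)) 0 0.
      by rewrite /u /qform trmx_mul PQ.1.
    rewrite eN h1 /M /s -h3; exact: h2.
  + have := hle (\sum_(i < k) d i *: (x i - nuhat V x))^T.
    by rewrite rqG trmxK rqE trmxK.
Qed.
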